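(* Let $K$ be a complete non-archimedean field, $R$ a Banach $K$-algebra, and $R_0\subseteq R_1\subseteq\cdots$ a nested collection of complete subrings of $R$ such that $\bigcup_hR_h$ is dense in $R$. Let $s_1,\dots,s_N\in R\langle\theta_1,\dots,\theta_n\rangle$. For every $\varepsilon>0$ there exist an integer $h$ and elements $\tilde s_1,\dots,\tilde s_N\in R_h\langle\theta_1,\dots,\theta_n\rangle$ such that: (1) $|s_\alpha-\tilde s_\alpha|<\varepsilon$ for each $\alpha$; (2) for all $\alpha,\beta\in\{1,\dots,N\}$ and $k\in\{1,\dots,n\}$ with $s_\alpha|_{\theta_k=0}=s_\beta|_{\theta_k=0}$ one has $\tilde s_\alpha|_{\theta_k=0}=\tilde s_\beta|_{\theta_k=0}$; (3) for all $\alpha,\beta$ and $k$ with $s_\alpha|_{\theta_k=1}=s_\beta|_{\theta_k=1}$ one has $\tilde s_\alpha|_{\theta_k=1}=\tilde s_\beta|_{\theta_k=1}$; (4) for every $\alpha$, if $s_\alpha|_{\theta_1=1}\in R_{h'}\langle\theta_1,\dots,\theta_n\rangle$ for some $h'$, then $\tilde s_\alpha|_{\theta_1=1}=s_\alpha|_{\theta_1=1}$.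
   Context: $R\langle\theta_1,\dots,\theta_n\rangle$ is the ring of strictly convergent power series over $R$ with the Gauss norm $|\sum a_I\theta^I|=\max_I\|a_I\|$, and $R_h\langle\theta\rangle$ is the corresponding subring. $s|_{\theta_k=\epsilon}$ denotes the image of $s$ under the substitution $\theta_k=\epsilon$. *)

(* Defs.v *)
From HB Require Import structures.
From mathcomp Require Import all_boot all_order all_algebra.
From mathcomp Require Import classical_sets reals.
From Stdlib Require Import ClassicalEpsilon.
Set Implicit Arguments. Unset Strict Implicit. Unset Printing Implicit Defensive.
Import Order.TTheory GRing.Theory Num.Theory.
Local Open Scope ring_scope.
Local Open Scope classical_set_scope.

Section Defs.
Variable Rr : realType.

Definition cauchy_seq (V : zmodType) (nrm : V -> Rr) (u : nat -> V) : Prop :=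
  forall eps : Rr, 0 < eps -> exists M : nat,
    forall m p : nat, (M <= m)%N -> (M <= p)%N -> nrm (u m - u p) < eps.

Definition converges_to (V : zmodType) (nrm : V -> Rr) (u : nat -> V) (l : V) : Prop :=
  forall eps : Rr, 0 < eps -> exists M : nat,
    forall m : nat, (M <= m)%N -> nrm (u m - l) < eps.

Definition complete_wrt (V : zmodType) (nrm : V -> Rr) : Prop :=
  forall u : nat -> V, cauchy_seq nrm u -> exists l, converges_to nrm u l.

Definition nonarch_complete_field (K : fieldType) (absK : K -> Rr) : Prop :=
  [/\ forall x, 0 <= absK x,
      forall x, absK x = 0 <-> x = 0,
      forall x y, absK (x * y) = absK x * absK y,
      forall x y, absK (x + y) <= Num.max (absK x) (absK y)
    & complete_wrt absK].

Definition banach_algebra (K : fieldType) (absK : K -> Rr) (R : algType K)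
    (normR : R -> Rr) : Prop :=
  (forall x, 0 <= normR x) /\
  [/\ forall x, normR x = 0 <-> x = 0,
      forall x y, normR (x + y) <= Num.max (normR x) (normR y),
      forall x y, normR (x * y) <= normR x * normR y,
      forall (c : K) x, normR (c *: x) = absK c * normR x
    & complete_wrt normR].

Definition complete_subring (R : nzRingType) (normR : R -> Rr) (P : {pred R}) : Prop :=
  [/\ 1 \in P,
      forall x y, x \in P -> y \in P -> x - y \in P,
      forall x y, x \in P -> y \in P -> x * y \in P
    & forall u : nat -> R, (forall m, u m \in P) -> cauchy_seq normR u ->
        exists2 l, l \in P & converges_to normR u l].

Definition nested (R : Type) (Rsub : nat -> {pred R}) : Prop :=
  forall h : nat, {subset Rsub h <= Rsub h.+1}.

Definition dense_union (R : zmodType) (normR : R -> Rr) (Rsub : nat -> {pred R}) : Prop :=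
  forall (x : R) (eps : Rr), 0 < eps -> exists h : nat, exists2 y, y \in Rsub h & normR (x - y) < eps.

(* multi-indices I = (I_1,...,I_n); theta^I = prod_k theta_k^(I_k) *)
Definition mindex (n : nat) := {ffun 'I_n -> nat}.
Definition mdeg (n : nat) (I : mindex n) : nat := (\sum_(k < n) I k)%N.

(* a power series sum_I a_I theta^I is represented by its coefficient function a *)
Definition strictly_convergent (R : zmodType) (normR : R -> Rr) (n : nat)
    (a : mindex n -> R) : Prop :=
  forall eps : Rr, 0 < eps -> exists M : nat,
    forall I : mindex n, (M <= mdeg I)%N -> normR (a I) < eps.

(* membership in R<theta>, resp. in the subring R_h<theta> (P = R_h) *)
Definition in_tate (R : zmodType) (normR : R -> Rr) (P : {pred R}) (n : nat)
    (a : mindex n -> R) : Prop :=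
  strictly_convergent normR a /\ forall I, a I \in P.

Definition gauss_norm (R : zmodType) (normR : R -> Rr) (n : nat) (a : mindex n -> R) : Rr :=
  sup [set normR (a I) | I in [set: mindex n]].

Definition mupd (n : nat) (I : mindex n) (k : 'I_n) (j : nat) : mindex n :=
  [ffun i => if i == k then j else I i].

Definition series_sum (R : zmodType) (normR : R -> Rr) (u : nat -> R) : R :=
  epsilon (inhabits 0) (fun l => converges_to normR (fun m => \sum_(j < m) u j) l).

Definition subst0 (R : zmodType) (n : nat) (k : 'I_n) (a : mindex n -> R) : mindex n -> R :=
  fun I => if I k == 0%N then a I else 0.

Definition subst1 (R : zmodType) (normR : R -> Rr) (n : nat) (k : 'I_n)
    (a : mindex n -> R) : mindex n -> R :=
  fun I => if I k == 0%N then series_sum normR (fun j => a (mupd I k j)) else 0.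

End Defs.

(* Main.v *)
Require Import Defs.
From mathcomp Require Import all_boot all_order all_algebra.
From mathcomp Require Import boolp classical_sets reals zify.
From Stdlib Require Import ClassicalEpsilon Classical.
Set Implicit Arguments. Unset Strict Implicit. Unset Printing Implicit Defensive.
Import Order.TTheory GRing.Theory Num.Theory.
Local Open Scope ring_scope.

Lemma sub2 (V : zmodType) (x y x' y' : V) : (x - y) - (x' - y') = (x - x') - (y - y').
Proof. by rewrite !opprB addrACA [in RHS]addrACA [- y + _]addrC. Qed.
Lemma sub3 (V : zmodType) (a b c a' b' c' : V) :
  (a - b - c) - (a' - b' - c') = (a - a') - (b - b') - (c - c').
Proof. by rewrite sub2 [X in X - _ = _]sub2. Qed.

Section Midx.
Variable n : nat.
Implicit Types (I J : mindex n) (k l : 'I_n).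

Lemma mupd_at I k j : mupd I k j k = j.
Proof. by rewrite /mupd ffunE eqxx. Qed.

Lemma mupd_ne I k l j : l != k -> mupd I k j l = I l.
Proof. by move=> h; rewrite /mupd ffunE (negbTE h). Qed.

Lemma mupd_idE I k j : I k = j -> mupd I k j = I.
Proof. by move=> <-; apply/ffunP => i; rewrite /mupd ffunE; case: eqP => // ->. Qed.

Lemma mupd_mupd I k j j' : mupd (mupd I k j) k j' = mupd I k j'.
Proof. by apply/ffunP => i; rewrite /mupd !ffunE; case: eqP. Qed.

Lemma mupdC I k l j j' : k != l -> mupd (mupd I k j) l j' = mupd (mupd I l j') k j.
Proof.
move=> hkl; apply/ffunP => i; rewrite /mupd !ffunE.
case: (eqVneq i l) => [->|hil]; first by rewrite eq_sym (negbTE hkl).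
by [].
Qed.

Lemma mdeg_split I k : mdeg I = (I k + \sum_(i < n | i != k) I i)%N.
Proof. by rewrite /mdeg (bigD1 k). Qed.

Lemma mdeg_ge I k : (I k <= mdeg I)%N.
Proof. by rewrite (mdeg_split I k) leq_addr. Qed.

Lemma mdeg_mupd I k j : (mdeg (mupd I k j) + I k = mdeg I + j)%N.
Proof.
rewrite (mdeg_split _ k) (mdeg_split I k) mupd_at.
have -> : (\sum_(i < n | i != k) mupd I k j i = \sum_(i < n | i != k) I i)%N.
  by apply: eq_bigr => i hi; rewrite mupd_ne.
lia.
Qed.

Lemma mdeg_ge2 I k l : k != l -> (I k + I l <= mdeg I)%N.
Proof.
move=> hkl; rewrite (mdeg_split I k) leq_add2l (bigD1 l) /=; last by rewrite eq_sym.
exact: leq_addr.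
Qed.

End Midx.

Section Ultra.
Variable Rr : realType.
Variable V : zmodType.
Variable nrm : V -> Rr.
Hypothesis nrm_ge0 : forall x, 0 <= nrm x.
Hypothesis nrm_eq0 : forall x, nrm x = 0 <-> x = 0.
Hypothesis nrmN : forall x, nrm (- x) = nrm x.
Hypothesis nrmD : forall x y, nrm (x + y) <= Num.max (nrm x) (nrm y).
Hypothesis compl : complete_wrt nrm.

Lemma nrm0 : nrm 0 = 0. Proof. by apply/nrm_eq0. Qed.

Lemma nrmD_lt x y e : nrm x < e -> nrm y < e -> nrm (x + y) < e.
Proof. by move=> hx hy; apply: le_lt_trans (nrmD x y) _; rewrite gt_max hx hy. Qed.

Lemma nrmB_lt x y e : nrm x < e -> nrm y < e -> nrm (x - y) < e.
Proof. by move=> hx hy; apply: nrmD_lt => //; rewrite nrmN. Qed.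

Lemma nrmBC x y : nrm (x - y) = nrm (y - x).
Proof. by rewrite -nrmN opprB. Qed.

Lemma nrm_sum_lt (I : Type) (r : seq I) (P : pred I) (F : I -> V) e :
  0 < e -> (forall i, P i -> nrm (F i) < e) -> nrm (\sum_(i <- r | P i) F i) < e.
Proof.
move=> e0 hF; elim: r => [|i r IH]; first by rewrite big_nil nrm0.
by rewrite big_cons; case: ifP => // hP; apply: nrmD_lt => //; apply: hF.
Qed.

Definition null (u : nat -> V) := forall e : Rr, 0 < e -> exists M : nat,
  forall m, (M <= m)%N -> nrm (u m) < e.

Definition psum (u : nat -> V) (m : nat) := \sum_(j < m) u j.

Lemma psum_split (u : nat -> V) m p : (m <= p)%N ->
  psum u p = psum u m + \sum_(m <= j < p) u j.
Proof.
move=> hmp; by rewrite /psum -!(big_mkord xpredT) (big_cat_nat (leq0n m) hmp).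
Qed.

Lemma null_cauchy u : null u -> cauchy_seq nrm (psum u).
Proof.
move=> hu e e0; have [M hM] := hu e e0; exists M => m p hm hp.
have key : forall m p, (M <= m)%N -> (m <= p)%N -> nrm (psum u m - psum u p) < e.
  move=> m' p' hm' hmp; rewrite (psum_split u hmp) opprD addrA subrr add0r nrmN.
  rewrite big_nat_cond; apply: nrm_sum_lt => // i /andP[/andP[hi _] _].
  by apply: hM; apply: leq_trans hi.
case: (leqP m p) => hmp; first exact: key.
by rewrite nrmBC; apply: key => //; apply: ltnW.
Qed.

Lemma cvg_unique (u : nat -> V) l1 l2 :
  converges_to nrm u l1 -> converges_to nrm u l2 -> l1 = l2.
Proof.
move=> h1 h2; apply/eqP; rewrite -subr_eq0; apply/eqP/nrm_eq0.
apply/eqP; rewrite eq_le nrm_ge0 andbT; apply/negP => /negP; rewrite -ltNge => hp.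
have [M1 hM1] := h1 _ hp; have [M2 hM2] := h2 _ hp.
have := nrmB_lt (hM2 (maxn M1 M2) (leq_maxr _ _)) (hM1 (maxn M1 M2) (leq_maxl _ _)).
by rewrite opprB addrC addrA subrK ltxx.
Qed.

Lemma ssum_cvg u : null u -> converges_to nrm (psum u) (series_sum nrm u).
Proof.
move=> hu; rewrite /series_sum; apply: epsilon_spec.
exact: compl (null_cauchy hu).
Qed.

Lemma ssum_eq u l : null u -> converges_to nrm (psum u) l -> series_sum nrm u = l.
Proof. by move=> hu hl; apply: cvg_unique (ssum_cvg hu) hl. Qed.

Lemma cvgD (u v : nat -> V) lu lv : converges_to nrm u lu -> converges_to nrm v lv ->
  converges_to nrm (fun m => u m + v m) (lu + lv).
Proof.
move=> hu hv e e0; have [M1 h1] := hu e e0; have [M2 h2] := hv e e0.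
exists (maxn M1 M2) => m hm.
have -> : u m + v m - (lu + lv) = (u m - lu) + (v m - lv).
  by rewrite opprD addrACA.
apply: nrmD_lt; [apply: h1 | apply: h2]; apply: leq_trans hm;
  [exact: leq_maxl | exact: leq_maxr].
Qed.

Lemma cvgN (u : nat -> V) lu : converges_to nrm u lu ->
  converges_to nrm (fun m => - u m) (- lu).
Proof. by move=> hu e e0; have [M h] := hu e e0; exists M => m hm; rewrite -opprD nrmN h. Qed.

Lemma nullD u v : null u -> null v -> null (fun j => u j + v j).
Proof.
move=> hu hv e e0; have [M1 h1] := hu e e0; have [M2 h2] := hv e e0.
exists (maxn M1 M2) => m hm; apply: nrmD_lt; [apply: h1 | apply: h2];
  apply: leq_trans hm; [exact: leq_maxl | exact: leq_maxr].
Qed.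

Lemma nullN u : null u -> null (fun j => - u j).
Proof. by move=> hu e e0; have [M h] := hu e e0; exists M => m hm; rewrite nrmN h. Qed.

Lemma null0 : null (fun _ => 0).
Proof. by move=> e e0; exists 0%N => m _; rewrite nrm0. Qed.

Lemma ssumD u v : null u -> null v ->
  series_sum nrm (fun j => u j + v j) = series_sum nrm u + series_sum nrm v.
Proof.
move=> hu hv; apply: ssum_eq; first exact: nullD.
have := cvgD (ssum_cvg hu) (ssum_cvg hv).
by rewrite /psum; under eq_fun do rewrite -big_split.
Qed.

Lemma ssumN u : null u -> series_sum nrm (fun j => - u j) = - series_sum nrm u.
Proof.
move=> hu; apply: ssum_eq; first exact: nullN.
have := cvgN (ssum_cvg hu).
by rewrite /psum; under eq_fun do rewrite -sumrN.
Qed.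

Lemma nullB u v : null u -> null v -> null (fun j => u j - v j).
Proof. by move=> hu hv; apply: nullD => //; apply: nullN. Qed.

Lemma ssumB u v : null u -> null v ->
  series_sum nrm (fun j => u j - v j) = series_sum nrm u - series_sum nrm v.
Proof. by move=> hu hv; rewrite ssumD ?ssumN //; exact: nullN. Qed.

Lemma ssum_fin u m : (forall j, (m <= j)%N -> u j = 0) ->
  series_sum nrm u = \sum_(j < m) u j.
Proof.
move=> hu; apply: ssum_eq.
  by move=> e e0; exists m => j hj; rewrite hu // nrm0.
move=> e e0; exists m => p hp; rewrite (psum_split u hp) big_nat_cond big1 ?addr0.
  by rewrite /psum subrr nrm0.
by move=> i /andP[/andP[hi _] _]; apply: hu.
Qed.

Lemma ssum0 : series_sum nrm (fun _ => 0) = 0.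
Proof. by rewrite (@ssum_fin _ 0) // big_ord0. Qed.

Lemma ssum1 u : (forall j, j != 0%N -> u j = 0) -> series_sum nrm u = u 0%N.
Proof.
move=> hu; rewrite (@ssum_fin _ 1) ?big_ord1 // => j; case: j => // j _; exact: hu.
Qed.

Lemma null_succ u : null u -> null (fun j => u j.+1).
Proof. by move=> hu e e0; have [M h] := hu e e0; exists M => m hm; apply: h; apply: leqW. Qed.

Lemma ssum_shift u : null u -> series_sum nrm u = u 0%N + series_sum nrm (fun j => u j.+1).
Proof.
move=> hu; have hu' : null (fun j => u j.+1).
  by move=> e e0; have [M h] := hu e e0; exists M => m hm; apply: h; apply: leqW.
apply: ssum_eq => // e e0; have [M h] := ssum_cvg hu' e0.
exists M.+1 => m hm; case: m hm => // m hm.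
rewrite /psum big_ord_recl opprD addrA (addrAC (u ord0)) subrr add0r; by apply: h.
Qed.

Lemma null_shift u c : null u -> null (fun j => u (j + c)%N).
Proof.
by move=> hu e e0; have [M h] := hu e e0; exists M => m hm; apply: h; apply: leq_trans hm (leq_addr _ _).
Qed.

Lemma ssum_split u P : null u ->
  series_sum nrm u = \sum_(j < P) u j + series_sum nrm (fun j => u (j + P)%N).
Proof.
move=> hu; elim: P => [|P IH]; first by rewrite big_ord0 add0r; congr series_sum; apply: funext => j; rewrite addn0.
rewrite IH big_ord_recr /= -addrA; congr (_ + _).
rewrite (ssum_shift (null_shift P hu)) add0n; congr (_ + _).
by congr series_sum; apply: funext => j; rewrite addSnnS.
Qed.

Lemma ssum_lt u e : null u -> (forall j, nrm (u j) < e) -> nrm (series_sum nrm u) < e.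
Proof.
move=> hu hb; have e0 : 0 < e by apply: le_lt_trans (hb 0%N).
have [M h] := ssum_cvg hu e0.
have -> : series_sum nrm u = psum u M - (psum u M - series_sum nrm u) by rewrite opprB addrC subrK.
by apply: nrmB_lt; [apply: nrm_sum_lt | apply: h].
Qed.

Lemma ssum_tele d : null d -> series_sum nrm (fun j => d j - d j.+1) = d 0%N.
Proof.
move=> hd; have hd' : null (fun j => d j - d j.+1).
  apply: nullD => //; apply: nullN; exact: null_succ.
apply: ssum_eq => // e e0; have [M h] := hd e e0.
exists M => m hm; rewrite /psum.
have -> : \sum_(j < m) (d j - d j.+1) = d 0%N - d m.
  by elim: m {hm} => [|m IH]; rewrite ?big_ord0 ?subrr // big_ord_recr /= IH addrA subrK.
by rewrite addrAC subrr add0r nrmN h.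
Qed.

Lemma ssum_sum (I : Type) (r : seq I) (F : I -> nat -> V) :
  (forall i, null (F i)) ->
  series_sum nrm (fun j => \sum_(i <- r) F i j) = \sum_(i <- r) series_sum nrm (F i).
Proof.
move=> hF; elim: r => [|i r IH].
  by rewrite big_nil; under eq_fun do rewrite big_nil; exact: ssum0.
rewrite big_cons -IH; under eq_fun do rewrite big_cons.
apply: ssumD => //; elim: r {IH} => [|i' r IH]; first by under eq_fun do rewrite big_nil; exact: null0.
by under eq_fun do rewrite big_cons; apply: nullD.
Qed.

Lemma fubini (a : nat -> nat -> V) :
  (forall e : Rr, 0 < e -> exists M, forall i j, (M <= i + j)%N -> nrm (a i j) < e) ->
  series_sum nrm (fun i => series_sum nrm (fun j => a i j)) =
  series_sum nrm (fun j => series_sum nrm (fun i => a i j)).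
Proof.
move=> ha.
have rown i : null (fun j => a i j).
  by move=> e e0; have [M h] := ha e e0; exists M => j hj; apply: h; apply: leq_trans hj (leq_addl _ _).
have coln j : null (fun i => a i j).
  by move=> e e0; have [M h] := ha e e0; exists M => i hi; apply: h; apply: leq_trans hi (leq_addr _ _).
have rnull : null (fun i => series_sum nrm (fun j => a i j)).
  move=> e e0; have [M h] := ha e e0; exists M => i hi; apply: ssum_lt => // j.
  by apply: h; apply: leq_trans hi (leq_addr _ _).
have cnull : null (fun j => series_sum nrm (fun i => a i j)).
  move=> e e0; have [M h] := ha e e0; exists M => j hj; apply: ssum_lt => // i.
  by apply: h; apply: leq_trans hj (leq_addl _ _).
apply: ssum_eq => // e e0.
have [M h] := ha e e0; have [M2 h2] := ssum_cvg cnull e0.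
exists (maxn M M2) => P hP.
have hMP : (M <= P)%N by exact: leq_trans (leq_maxl _ _) hP.
set C := series_sum nrm _.
have -> : psum (fun i => series_sum nrm (fun j => a i j)) P - C =
   (psum (fun i => series_sum nrm (fun j => a i j)) P
     - psum (fun j => series_sum nrm (fun i => a i j)) P)
   + (psum (fun j => series_sum nrm (fun i => a i j)) P - C).
  by rewrite addrA subrK.
apply: nrmD_lt; last by apply: h2; exact: leq_trans (leq_maxr _ _) hP.
rewrite /psum.
have er i : series_sum nrm (fun j => a i j) = \sum_(j < P) a i j + series_sum nrm (fun j => a i (j + P)%N).
  exact: ssum_split.
have ec j : series_sum nrm (fun i => a i j) = \sum_(i < P) a i j + series_sum nrm (fun i => a (i + P)%N j).
  exact: ssum_split.
under eq_bigr do rewrite er; under [X in _ - X]eq_bigr do rewrite ec.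
rewrite !big_split /= [X in _ - (X + _)]exchange_big.
rewrite opprD addrACA subrr add0r; apply: nrmB_lt; apply: nrm_sum_lt => // i _;
  (apply: ssum_lt; first (exact: null_shift _ (rown _) || exact: null_shift _ (coln _))); move=> j; apply: h; apply: leq_trans hMP _.
  by rewrite addnA leq_addl.
by rewrite addnAC leq_addl.
Qed.


Section Ops.
Variable n : nat.
Implicit Types (I J : mindex n) (k l : 'I_n) (a d : mindex n -> V).

Local Notation ssum := (series_sum nrm).
Local Notation dec := (strictly_convergent nrm).

Lemma dec_null a I k c : dec a -> null (fun j => a (mupd I k (j + c))).
Proof.
move=> ha e e0; have [M h] := ha e e0; exists M => j hj; apply: h.
apply: leq_trans (mdeg_ge _ k); rewrite mupd_at; apply: leq_trans hj (leq_addr _ _).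
Qed.

Lemma dec_null0 a I k : dec a -> null (fun j => a (mupd I k j)).
Proof.
move=> ha e e0; have [M h] := ha e e0; exists M => j hj; apply: h.
by apply: leq_trans (mdeg_ge _ k); rewrite mupd_at.
Qed.

Definition Lam k a : mindex n -> V := fun I =>
  if I k == 0%N then a I
  else if I k == 1%N then ssum (fun j => a (mupd I k j))
  else ssum (fun j => a (mupd I k (j + I k))).

Definition Rho k d : mindex n -> V := fun I =>
  if I k == 0%N then d I
  else if I k == 1%N then d I - d (mupd I k 0) - d (mupd I k 2)
  else d I - d (mupd I k (I k).+1).

Definition Sp k d : mindex n -> V := fun I =>
  if (I k <= 1)%N then d (mupd I k 0) else 0.

Definition Tp k d : mindex n -> V := fun I =>
  if (I k <= 1)%N then d (mupd I k 1) else 0.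

Lemma LamE0 k a I : I k = 0%N -> Lam k a I = a I.
Proof. by rewrite /Lam => ->. Qed.

Lemma LamE1 k a I : I k = 1%N -> Lam k a I = ssum (fun j => a (mupd I k j)).
Proof. by rewrite /Lam => ->. Qed.

Lemma LamE2 k a I m : I k = m.+2 -> Lam k a I = ssum (fun j => a (mupd I k (j + m.+2))).
Proof. by rewrite /Lam => ->. Qed.

Lemma LamU0 k a I : Lam k a (mupd I k 0) = a (mupd I k 0).
Proof. by rewrite LamE0 ?mupd_at. Qed.

Lemma LamU1 k a I : Lam k a (mupd I k 1) = ssum (fun j => a (mupd I k j)).
Proof. by rewrite LamE1 ?mupd_at //; under eq_fun do rewrite mupd_mupd. Qed.

Lemma LamU2 k a I m : Lam k a (mupd I k m.+2) = ssum (fun j => a (mupd I k (j + m.+2))).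
Proof. by rewrite (@LamE2 _ _ _ m) ?mupd_at //; under eq_fun do rewrite mupd_mupd. Qed.

Lemma RhoE0 k d I : I k = 0%N -> Rho k d I = d I.
Proof. by rewrite /Rho => ->. Qed.

Lemma RhoE1 k d I : I k = 1%N -> Rho k d I = d I - d (mupd I k 0) - d (mupd I k 2).
Proof. by rewrite /Rho => ->. Qed.

Lemma RhoE2 k d I m : I k = m.+2 -> Rho k d I = d I - d (mupd I k m.+3).
Proof. by rewrite /Rho => ->. Qed.

Lemma RhoLam k a : dec a -> Rho k (Lam k a) = a.
Proof.
move=> ha; apply: funext => I.
case E: (I k) => [|[|m]].
- by rewrite RhoE0 // LamE0.
- rewrite RhoE1 // LamE1 // LamU0 LamU2.
  rewrite (ssum_split 2%N (dec_null0 I k ha)).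
  rewrite !big_ord_recl big_ord0 /= addr0 (mupd_idE E).
  by rewrite [_ + _ - a (mupd I k 0)]addrAC addrK addrAC subrr add0r.
rewrite (RhoE2 _ E) (LamE2 _ E) LamU2.
rewrite (ssum_shift (dec_null I k m.+2 ha)) /= add0n (mupd_idE E).
set s1 := ssum _; set s2 := ssum _.
suff -> : s1 = s2 by rewrite addrK.
by rewrite /s1 /s2; congr ssum; apply: funext => j; rewrite addSnnS.
Qed.

Lemma S0U k a I j : subst0 k a (mupd I k j) = if j == 0%N then a (mupd I k j) else 0.
Proof. by rewrite /subst0 mupd_at. Qed.

Lemma S1U k a I j : subst1 nrm k a (mupd I k j) =
  if j == 0%N then ssum (fun i => a (mupd I k i)) else 0.
Proof. by rewrite /subst1 mupd_at; case: eqP => // _; under eq_fun do rewrite mupd_mupd. Qed.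

Lemma SpU k d I j : Sp k d (mupd I k j) = if (j <= 1)%N then d (mupd I k 0) else 0.
Proof. by rewrite /Sp mupd_at mupd_mupd. Qed.

Lemma TpU k d I j : Tp k d (mupd I k j) = if (j <= 1)%N then d (mupd I k 1) else 0.
Proof. by rewrite /Tp mupd_at mupd_mupd. Qed.

Lemma ssum_zero (u : nat -> V) : (forall j, u j = 0) -> ssum u = 0.
Proof. by move=> h; rewrite (@ssum_fin _ 0%N) ?big_ord0. Qed.

Lemma Lam_S0 k a : Lam k (subst0 k a) = Sp k (Lam k a).
Proof.
apply: funext => I; case E: (I k) => [|[|m]].
- by rewrite LamE0 // /Sp E LamU0 (mupd_idE E) /subst0 E.
- rewrite LamE1 // /Sp E LamU0 ssum1; first by rewrite S0U.
  by move=> j hj; rewrite S0U (negbTE hj).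
- by rewrite (LamE2 _ E) /Sp E ssum_zero // => j; rewrite S0U addnS.
Qed.

Lemma Lam_S1 k a : Lam k (subst1 nrm k a) = Tp k (Lam k a).
Proof.
apply: funext => I; case E: (I k) => [|[|m]].
- by rewrite LamE0 // /Tp E LamU1 /subst1 E.
- rewrite LamE1 // /Tp E LamU1 ssum1; first by rewrite S1U.
  by move=> j hj; rewrite S1U (negbTE hj).
- by rewrite (LamE2 _ E) /Tp E ssum_zero // => j; rewrite S1U addnS.
Qed.

Lemma Rho_Sp k d : Rho k (Sp k d) = subst0 k (Rho k d).
Proof.
apply: funext => I; rewrite /subst0; case E: (I k) => [|[|m]] /=.
- by rewrite RhoE0 // RhoE0 // /Sp E (mupd_idE E).
- by rewrite RhoE1 // !SpU /Sp E subrr sub0r oppr0.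
- by rewrite (RhoE2 _ E) SpU /Sp E subrr.
Qed.

Lemma dec_Lam k a : dec a -> dec (Lam k a).
Proof.
move=> ha e e0; have [M h] := ha e e0; exists M.+1 => I hI.
case E: (I k) => [|[|m]].
- by rewrite LamE0 //; apply: h; apply: ltnW.
- rewrite LamE1 //; apply: ssum_lt; first exact: dec_null0.
  move=> j; apply: h; have := mdeg_mupd I k j; rewrite E; lia.
- rewrite (LamE2 _ E); apply: ssum_lt; first exact: dec_null.
  move=> j; apply: h; have := mdeg_mupd I k (j + m.+2); rewrite E; lia.
Qed.

Lemma dec_Rho k d : dec d -> dec (Rho k d).
Proof.
move=> hd e e0; have [M h] := hd e e0; exists M.+1 => I hI.
case E: (I k) => [|[|m]].
- by rewrite RhoE0 //; apply: h; apply: ltnW.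
- rewrite RhoE1 //; apply: nrmB_lt; first apply: nrmB_lt.
  + by apply: h; apply: ltnW.
  + apply: h; have := mdeg_mupd I k 0; rewrite E; lia.
  + apply: h; have := mdeg_mupd I k 2; rewrite E; lia.
- rewrite (RhoE2 _ E); apply: nrmB_lt.
  + by apply: h; apply: ltnW.
  + apply: h; have := mdeg_mupd I k m.+3; rewrite E; lia.
Qed.

Lemma dec_S0 k a : dec a -> dec (subst0 k a).
Proof.
move=> ha e e0; have [M h] := ha e e0; exists M => I hI.
by rewrite /subst0; case: ifP => _; [apply: h | rewrite nrm0].
Qed.

Lemma dec_S1 k a : dec a -> dec (subst1 nrm k a).
Proof.
move=> ha e e0; have [M h] := ha e e0; exists M => I hI.
rewrite /subst1; case: eqP => E; last by rewrite nrm0.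
apply: ssum_lt; first exact: dec_null0.
move=> j; apply: h; have := mdeg_mupd I k j; rewrite E; lia.
Qed.

Lemma dec_Sp k d : dec d -> dec (Sp k d).
Proof.
move=> hd e e0; have [M h] := hd e e0; exists M.+1 => I hI.
rewrite /Sp; case: ifP => hk; last by rewrite nrm0.
apply: h; have := mdeg_mupd I k 0; lia.
Qed.

Lemma dec_Tp k d : dec d -> dec (Tp k d).
Proof.
move=> hd e e0; have [M h] := hd e e0; exists M.+1 => I hI.
rewrite /Tp; case: ifP => hk; last by rewrite nrm0.
apply: h; have := mdeg_mupd I k 1; lia.
Qed.

Lemma Rho_Tp k d : dec d -> Rho k (Tp k d) = subst1 nrm k (Rho k d).
Proof.
move=> hd; apply: funext => I; rewrite /subst1; case E: (I k) => [|[|m]] /=.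
- rewrite RhoE0 // /Tp E.
  rewrite (ssum_split 2%N (dec_null0 I k (dec_Rho k hd))).
  rewrite !big_ord_recl big_ord0 /= addr0.
  rewrite RhoE0 ?mupd_at // RhoE1 ?mupd_at // !mupd_mupd.
  have -> : ssum (fun j => Rho k d (mupd I k (j + 2))) =
      ssum (fun j => d (mupd I k (j + 2)) - d (mupd I k (j + 2).+1)).
    congr ssum; apply: funext => j.
    by rewrite (@RhoE2 _ _ _ j) ?mupd_at ?addn2 // mupd_mupd.
  rewrite (ssum_tele (d := fun j => d (mupd I k (j + 2)))); last exact: dec_null.
  by rewrite add0n; change (bump 0 0) with 1%N; rewrite addrA subrK addrC subrK.
- by rewrite RhoE1 // !TpU /Tp E subrr sub0r oppr0.
- by rewrite (RhoE2 _ E) TpU /Tp E subrr.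
Qed.

Lemma ssum_if (b : bool) (u : nat -> V) :
  ssum (fun j => if b then u j else 0) = if b then ssum u else 0.
Proof. by case: b => //; rewrite ssum_zero. Qed.

Section Cross.
Variables (k l : 'I_n).
Hypothesis hlk : l != k.
Let hkl : k != l. Proof. by rewrite eq_sym. Qed.

Lemma LamX0 a I c : I l = 0%N -> Lam l a (mupd I k c) = a (mupd I k c).
Proof. by move=> E; rewrite LamE0 // mupd_ne. Qed.
Lemma LamX1 a I c : I l = 1%N ->
  Lam l a (mupd I k c) = ssum (fun j => a (mupd (mupd I k c) l j)).
Proof. by move=> E; rewrite LamE1 // mupd_ne. Qed.
Lemma LamX2 a I c m : I l = m.+2 ->
  Lam l a (mupd I k c) = ssum (fun j => a (mupd (mupd I k c) l (j + m.+2))).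
Proof. by move=> E; rewrite (@LamE2 _ _ _ m) // mupd_ne. Qed.
Lemma RhoX0 d I c : I l = 0%N -> Rho l d (mupd I k c) = d (mupd I k c).
Proof. by move=> E; rewrite RhoE0 // mupd_ne. Qed.
Lemma RhoX1 d I c : I l = 1%N -> Rho l d (mupd I k c) =
  d (mupd I k c) - d (mupd (mupd I k c) l 0) - d (mupd (mupd I k c) l 2).
Proof. by move=> E; rewrite RhoE1 // mupd_ne. Qed.
Lemma RhoX2 d I c m : I l = m.+2 -> Rho l d (mupd I k c) =
  d (mupd I k c) - d (mupd (mupd I k c) l m.+3).
Proof. by move=> E; rewrite (@RhoE2 _ _ _ m) // mupd_ne. Qed.

Lemma S0X a I j : subst0 k a (mupd I l j) = if I k == 0%N then a (mupd I l j) else 0.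
Proof. by rewrite /subst0 mupd_ne. Qed.
Lemma S1X a I j : subst1 nrm k a (mupd I l j) =
  if I k == 0%N then ssum (fun i => a (mupd (mupd I k i) l j)) else 0.
Proof.
rewrite /subst1 mupd_ne //; case: eqP => // _.
by congr ssum; apply: funext => i; rewrite mupdC.
Qed.
Lemma SpX d I j : Sp k d (mupd I l j) = if (I k <= 1)%N then d (mupd (mupd I k 0) l j) else 0.
Proof. by rewrite /Sp mupd_ne // mupdC. Qed.
Lemma TpX d I j : Tp k d (mupd I l j) = if (I k <= 1)%N then d (mupd (mupd I k 1) l j) else 0.
Proof. by rewrite /Tp mupd_ne // mupdC. Qed.

Lemma Lam_S0X a : Lam l (subst0 k a) = subst0 k (Lam l a).
Proof.
apply: funext => I; rewrite {2}/subst0; case E: (I l) => [|[|m]].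
- by rewrite !LamE0.
- rewrite !LamE1 //; under eq_fun do rewrite S0X.
  by rewrite ssum_if.
- rewrite !(LamE2 _ E); under eq_fun do rewrite S0X.
  by rewrite ssum_if.
Qed.

Lemma Lam_SpX d : Lam l (Sp k d) = Sp k (Lam l d).
Proof.
apply: funext => I; rewrite {2}/Sp; case E: (I l) => [|[|m]].
- rewrite LamE0 // /Sp; case: ifP => //; by rewrite LamX0.
- rewrite LamE1 //; under eq_fun => j do rewrite (SpX d I _).
  by rewrite ssum_if LamX1.
- rewrite (LamE2 _ E); under eq_fun => j do rewrite (SpX d I _).
  by rewrite ssum_if (LamX2 _ _ E).
Qed.

Lemma Lam_TpX d : Lam l (Tp k d) = Tp k (Lam l d).
Proof.
apply: funext => I; rewrite {2}/Tp; case E: (I l) => [|[|m]].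
- rewrite LamE0 // /Tp; case: ifP => //; by rewrite LamX0.
- rewrite LamE1 //; under eq_fun => j do rewrite (TpX d I _).
  by rewrite ssum_if LamX1.
- rewrite (LamE2 _ E); under eq_fun => j do rewrite (TpX d I _).
  by rewrite ssum_if (LamX2 _ _ E).
Qed.

Lemma Rho_S0X d : Rho l (subst0 k d) = subst0 k (Rho l d).
Proof.
apply: funext => I; rewrite {2}/subst0; case E: (I l) => [|[|m]].
- by rewrite !RhoE0.
- rewrite !RhoE1 // !S0X {1}/subst0; case: ifP => //.
  by rewrite !subr0.
- rewrite !(RhoE2 _ E) !S0X {1}/subst0; case: ifP => //.
  by rewrite !subr0.
Qed.

Lemma Rho_SpX d : Rho l (Sp k d) = Sp k (Rho l d).
Proof.
apply: funext => I; rewrite {2}/Sp; case E: (I l) => [|[|m]].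
- rewrite RhoE0 // /Sp; case: ifP => //; by rewrite RhoX0.
- rewrite RhoE1 // !SpX {1}/Sp; case: ifP => _; last by rewrite !subr0.
  by rewrite RhoX1 // mupdC.
- rewrite (RhoE2 _ E) !SpX {1}/Sp; case: ifP => _; last by rewrite !subr0.
  by rewrite (RhoX2 _ _ E) mupdC.
Qed.

Lemma Rho_TpX d : Rho l (Tp k d) = Tp k (Rho l d).
Proof.
apply: funext => I; rewrite {2}/Tp; case E: (I l) => [|[|m]].
- rewrite RhoE0 // /Tp; case: ifP => //; by rewrite RhoX0.
- rewrite RhoE1 // !TpX {1}/Tp; case: ifP => _; last by rewrite !subr0.
  by rewrite RhoX1 // mupdC.
- rewrite (RhoE2 _ E) !TpX {1}/Tp; case: ifP => _; last by rewrite !subr0.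
  by rewrite (RhoX2 _ _ E) mupdC.
Qed.

Lemma dec_null_gen a (f : nat -> mindex n) : dec a ->
  (forall i, (i <= mdeg (f i))%N) -> null (fun i => a (f i)).
Proof.
move=> ha hf e e0; have [M h] := ha e e0; exists M => i hi; apply: h.
exact: leq_trans hi (hf i).
Qed.

Lemma ge_kl I i c : (i <= mdeg (mupd (mupd I k i) l c))%N.
Proof. by apply: leq_trans (mdeg_ge _ k); rewrite mupd_ne // mupd_at. Qed.

Lemma dnull a I c : dec a -> null (fun i => a (mupd (mupd I k i) l c)).
Proof. by move=> ha; apply: dec_null_gen => // i; apply: ge_kl. Qed.

Lemma dbl a I c : dec a -> forall e : Rr, 0 < e -> exists M,
  forall j i, (M <= j + i)%N -> nrm (a (mupd (mupd I k i) l (j + c))) < e.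
Proof.
move=> ha e e0; have [M h] := ha e e0; exists M => j i hji; apply: h.
apply: leq_trans (mdeg_ge2 _ hkl); rewrite mupd_at mupd_ne // mupd_at; lia.
Qed.

Lemma dbl0 a I : dec a -> forall e : Rr, 0 < e -> exists M,
  forall j i, (M <= j + i)%N -> nrm (a (mupd (mupd I k i) l j)) < e.
Proof.
move=> ha e e0; have [M h] := ha e e0; exists M => j i hji; apply: h.
apply: leq_trans (mdeg_ge2 _ hkl); rewrite mupd_at mupd_ne // mupd_at; lia.
Qed.

Lemma Lam_S1X a : dec a -> Lam l (subst1 nrm k a) = subst1 nrm k (Lam l a).
Proof.
move=> ha; apply: funext => I; rewrite {2}/subst1; case E: (I l) => [|[|m]].
- rewrite LamE0 // /subst1; case: eqP => // _; congr ssum; apply: funext => i.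
  by rewrite LamX0.
- rewrite LamE1 //; under eq_fun do rewrite S1X.
  rewrite ssum_if; case: ifP => // _.
  transitivity (ssum (fun i => ssum (fun j => a (mupd (mupd I k i) l j)))).
    by rewrite (@fubini (fun j i => a (mupd (mupd I k i) l j))) //; apply: dbl0.
  by congr ssum; apply: funext => i; rewrite LamX1.
- rewrite (LamE2 _ E); under eq_fun do rewrite S1X.
  rewrite ssum_if; case: ifP => // _.
  transitivity (ssum (fun i => ssum (fun j => a (mupd (mupd I k i) l (j + m.+2))))).
    by rewrite (@fubini (fun j i => a (mupd (mupd I k i) l (j + m.+2)))) //; apply: dbl.
  by congr ssum; apply: funext => i; rewrite (LamX2 _ _ E).
Qed.

Lemma Rho_S1X d : dec d -> Rho l (subst1 nrm k d) = subst1 nrm k (Rho l d).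
Proof.
move=> hd; apply: funext => I; rewrite {2}/subst1; case E: (I l) => [|[|m]].
- rewrite RhoE0 // /subst1; case: eqP => // _; congr ssum; apply: funext => i.
  by rewrite RhoX0.
- rewrite RhoE1 // !S1X {1}/subst1; case: ifP => _; last by rewrite !subr0.
  have -> : ssum (fun i => Rho l d (mupd I k i)) = ssum (fun i =>
     d (mupd I k i) - d (mupd (mupd I k i) l 0) - d (mupd (mupd I k i) l 2)).
    by congr ssum; apply: funext => i; rewrite RhoX1.
  rewrite !ssumB //; try exact: dnull; try exact: dec_null0.
  by apply: nullB; [exact: dec_null0 | exact: dnull].
- rewrite (RhoE2 _ E) !S1X {1}/subst1; case: ifP => _; last by rewrite !subr0.
  have -> : ssum (fun i => Rho l d (mupd I k i)) = ssum (fun i =>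
     d (mupd I k i) - d (mupd (mupd I k i) l m.+3)).
    by congr ssum; apply: funext => i; rewrite (RhoX2 _ _ E).
  rewrite !ssumB //; try exact: dnull; try exact: dec_null0.
Qed.

End Cross.

Definition Dl (ks : seq 'I_n) a := foldl (fun x k => Lam k x) a ks.
Definition Rc (ks : seq 'I_n) d := foldr (fun k x => Rho k x) d ks.

Lemma dec_Dl ks a : dec a -> dec (Dl ks a).
Proof. by elim: ks a => [|k ks IH] a ha //=; apply: IH; apply: dec_Lam. Qed.

Lemma dec_Rc ks d : dec d -> dec (Rc ks d).
Proof. by elim: ks => [|k ks IH] //= hd; apply: dec_Rho; apply: IH. Qed.

Lemma Rc_Dl ks a : dec a -> Rc ks (Dl ks a) = a.
Proof.
elim: ks a => [|k ks IH] a ha //=.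
by rewrite IH ?RhoLam //; apply: dec_Lam.
Qed.

Lemma Dl_S0_notin k ks a : k \notin ks -> Dl ks (subst0 k a) = subst0 k (Dl ks a).
Proof.
elim: ks a => [|l ks IH] a //=; rewrite in_cons negb_or => /andP[hkl hks].
by rewrite Lam_S0X 1?eq_sym // IH.
Qed.

Lemma Dl_Sp_notin k ks d : k \notin ks -> Dl ks (Sp k d) = Sp k (Dl ks d).
Proof.
elim: ks d => [|l ks IH] d //=; rewrite in_cons negb_or => /andP[hkl hks].
by rewrite Lam_SpX 1?eq_sym // IH.
Qed.

Lemma Dl_Tp_notin k ks d : k \notin ks -> Dl ks (Tp k d) = Tp k (Dl ks d).
Proof.
elim: ks d => [|l ks IH] d //=; rewrite in_cons negb_or => /andP[hkl hks].
by rewrite Lam_TpX 1?eq_sym // IH.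
Qed.

Lemma Dl_S1_notin k ks a : dec a -> k \notin ks ->
  Dl ks (subst1 nrm k a) = subst1 nrm k (Dl ks a).
Proof.
elim: ks a => [|l ks IH] a ha //=; rewrite in_cons negb_or => /andP[hkl hks].
by rewrite Lam_S1X 1?eq_sym // IH //; apply: dec_Lam.
Qed.

Lemma Dl_S0 k ks a : uniq ks -> k \in ks -> Dl ks (subst0 k a) = Sp k (Dl ks a).
Proof.
elim: ks a => [|l ks IH] a //= /andP[hl hu]; rewrite in_cons.
case: (eqVneq k l) hl => [<-|hkl] hl /= hk.
  by rewrite Lam_S0 Dl_Sp_notin.
by rewrite Lam_S0X 1?eq_sym // IH.
Qed.

Lemma Dl_S1 k ks a : dec a -> uniq ks -> k \in ks ->
  Dl ks (subst1 nrm k a) = Tp k (Dl ks a).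
Proof.
elim: ks a => [|l ks IH] a ha //= /andP[hl hu]; rewrite in_cons.
case: (eqVneq k l) hl => [<-|hkl] hl /= hk.
  by rewrite Lam_S1 Dl_Tp_notin.
by rewrite Lam_S1X 1?eq_sym // IH //; apply: dec_Lam.
Qed.

Lemma Rc_S0_notin k ks d : k \notin ks -> Rc ks (subst0 k d) = subst0 k (Rc ks d).
Proof.
elim: ks => [|l ks IH] //=; rewrite in_cons negb_or => /andP[hkl hks].
by rewrite IH // Rho_S0X 1?eq_sym.
Qed.

Lemma Rc_Sp_notin k ks d : k \notin ks -> Rc ks (Sp k d) = Sp k (Rc ks d).
Proof.
elim: ks => [|l ks IH] //=; rewrite in_cons negb_or => /andP[hkl hks].
by rewrite IH // Rho_SpX 1?eq_sym.
Qed.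

Lemma Rc_Tp_notin k ks d : k \notin ks -> Rc ks (Tp k d) = Tp k (Rc ks d).
Proof.
elim: ks => [|l ks IH] //=; rewrite in_cons negb_or => /andP[hkl hks].
by rewrite IH // Rho_TpX 1?eq_sym.
Qed.

Lemma Rc_S1_notin k ks d : dec d -> k \notin ks ->
  Rc ks (subst1 nrm k d) = subst1 nrm k (Rc ks d).
Proof.
move=> hd; elim: ks => [|l ks IH] //=; rewrite in_cons negb_or => /andP[hkl hks].
by rewrite IH // Rho_S1X 1?eq_sym //; apply: dec_Rc.
Qed.

Lemma Rc_Sp k ks d : uniq ks -> k \in ks -> Rc ks (Sp k d) = subst0 k (Rc ks d).
Proof.
elim: ks => [|l ks IH] //= /andP[hl hu]; rewrite in_cons.
case: (eqVneq k l) hl => [<-|hkl] hl /= hk.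
  by rewrite Rc_Sp_notin // Rho_Sp.
by rewrite IH // Rho_S0X 1?eq_sym.
Qed.

Lemma Rc_Tp k ks d : dec d -> uniq ks -> k \in ks ->
  Rc ks (Tp k d) = subst1 nrm k (Rc ks d).
Proof.
move=> hd; elim: ks => [|l ks IH] //= /andP[hl hu]; rewrite in_cons.
case: (eqVneq k l) hl => [<-|hkl] hl /= hk.
  by rewrite Rc_Tp_notin // Rho_Tp //; apply: dec_Rc.
by rewrite IH // Rho_S1X 1?eq_sym //; apply: dec_Rc.
Qed.

Lemma Rc_close ks d1 d2 e : (forall J, nrm (d1 J - d2 J) < e) ->
  forall I, nrm (Rc ks d1 I - Rc ks d2 I) < e.
Proof.
elim: ks => [|k ks IH] //= h I.
case E: (I k) => [|[|m]].
- by rewrite !RhoE0 //; apply: IH.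
- by rewrite !RhoE1 // sub3; apply: nrmB_lt; first apply: nrmB_lt; apply: IH.
- by rewrite !(RhoE2 _ E) sub2; apply: nrmB_lt; apply: IH.
Qed.

Variable P : {pred V}.
Hypothesis PB : forall x y, x \in P -> y \in P -> x - y \in P.
Hypothesis Psum : forall u, null u -> (forall j, u j \in P) -> ssum u \in P.

Lemma Rc_in ks d : (forall J, d J \in P) -> forall I, Rc ks d I \in P.
Proof.
elim: ks => [|k ks IH] //= h I.
case E: (I k) => [|[|m]].
- by rewrite !RhoE0 //; apply: IH.
- by rewrite !RhoE1 //; apply: PB; first apply: PB; apply: IH.
- by rewrite !(RhoE2 _ E); apply: PB; apply: IH.
Qed.

Lemma Lam_in k a : dec a -> (forall J, a J \in P) -> forall I, Lam k a I \in P.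
Proof.
move=> ha h I; case E: (I k) => [|[|m]].
- by rewrite LamE0.
- by rewrite LamE1 //; apply: Psum => //; apply: dec_null0.
- by rewrite (LamE2 _ E); apply: Psum => //; apply: dec_null.
Qed.

Lemma Dl_in ks a : dec a -> (forall J, a J \in P) -> forall I, Dl ks a I \in P.
Proof.
elim: ks a => [|k ks IH] a ha h //=; apply: IH; first exact: dec_Lam.
exact: Lam_in.
Qed.

End Ops.

Lemma fin_choice (T : finType) (Q : T -> nat -> Prop) :
  (forall t m m', (m <= m')%N -> Q t m -> Q t m') ->
  (forall t, exists m, Q t m) -> exists m, forall t, Q t m.
Proof.
move=> mono ex.
suff : forall r : seq T, exists m, forall t, t \in r -> Q t m.
  by case/(_ (enum T)) => m hm; exists m => t; apply: hm; rewrite mem_enum.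
elim => [|t r [m hm]]; first by exists 0%N.
have [m' hm'] := ex t; exists (maxn m m') => t'; rewrite in_cons.
case/orP => [/eqP ->|ht]; first by apply: mono hm'; apply: leq_maxr.
by apply: mono (hm _ ht); apply: leq_maxl.
Qed.

Lemma Psum_of (P : {pred V}) : 0 \in P ->
  (forall x y, x \in P -> y \in P -> x - y \in P) ->
  (forall u : nat -> V, (forall m, u m \in P) -> cauchy_seq nrm u ->
        exists2 l, l \in P & converges_to nrm u l) ->
  forall u, null u -> (forall j, u j \in P) -> series_sum nrm u \in P.
Proof.
move=> P0 PB Pc u hu huP.
have PD x y : x \in P -> y \in P -> x + y \in P.
  move=> hx hy; have -> : x + y = x - (0 - y) by rewrite sub0r opprK.
  by apply: (PB) => //; apply: (PB).
have hps m : psum u m \in P.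
  by rewrite /psum; elim/big_ind: _ => // i _; apply: huP.
have [l hl hcv] := Pc _ hps (null_cauchy hu).
by rewrite (ssum_eq hu hcv).
Qed.


Lemma nested_le (Rsub : nat -> {pred V}) : nested Rsub ->
  forall h h', (h <= h')%N -> {subset Rsub h <= Rsub h'}.
Proof.
move=> hn h h' /subnK <-; elim: (h' - h)%N => [|d IH] x hx //.
by rewrite addSn; apply: hn; apply: IH.
Qed.

Section Main.
Variables (n N : nat) (Rsub : nat -> {pred V}) (s : 'I_N -> mindex n -> V).
Hypothesis RB : forall h x y, x \in Rsub h -> y \in Rsub h -> x - y \in Rsub h.
Hypothesis R0 : forall h, 0 \in Rsub h.
Hypothesis Rsum : forall h u, null u -> (forall j, u j \in Rsub h) -> series_sum nrm u \in Rsub h.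
Hypothesis Rnest : nested Rsub.
Hypothesis Rdense : dense_union nrm Rsub.
Hypothesis hs : forall alpha, strictly_convergent nrm (s alpha).

Local Notation dec := (strictly_convergent nrm).
Let ks := enum 'I_n.
Let ks_uniq : uniq ks. Proof. exact: enum_uniq. Qed.
Let ks_all k : k \in ks. Proof. by rewrite mem_enum. Qed.

Section F.
Variables (h : nat) (del : Rr).
Hypothesis del0 : 0 < del.

Definition Fa (x : V) : V :=
  if x \in Rsub h then x else if nrm x < del then 0 else
  let y := epsilon (inhabits 0) (fun y => y \in Rsub h /\ nrm (x - y) < del) in
  if y \in Rsub h then y else 0.

Lemma Fa_in x : Fa x \in Rsub h.
Proof. by rewrite /Fa; case: ifP => //; case: ifP => // _ _; case: ifP. Qed.

Lemma Fa_id x : x \in Rsub h -> Fa x = x.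
Proof. by rewrite /Fa => ->. Qed.

Lemma Fa0 : Fa 0 = 0.
Proof. exact: Fa_id. Qed.

Lemma Fa_small x : nrm x < del -> nrm (Fa x) <= nrm x /\ nrm (x - Fa x) < del.
Proof.
rewrite /Fa => hx; case: ifP => _; first by rewrite subrr nrm0.
by rewrite hx nrm0 subr0.
Qed.

Lemma Fa_approx x : (exists2 y, y \in Rsub h & nrm (x - y) < del) -> nrm (x - Fa x) < del.
Proof.
case=> y hy hxy; rewrite /Fa; case: ifP => _; first by rewrite subrr nrm0.
case: ifP => hx; first by rewrite subr0.
have := @epsilon_spec _ (inhabits 0) (fun y => y \in Rsub h /\ nrm (x - y) < del).
case; first by exists y.
by move=> -> ->.
Qed.

Definition Fc (d : mindex n -> V) : mindex n -> V := fun J => Fa (d J).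

Lemma Fc_Sp k d : Sp k (Fc d) = Fc (Sp k d).
Proof. by apply: funext => I; rewrite /Sp /Fc; case: ifP; rewrite ?Fa0. Qed.

Lemma Fc_Tp k d : Tp k (Fc d) = Fc (Tp k d).
Proof. by apply: funext => I; rewrite /Tp /Fc; case: ifP; rewrite ?Fa0. Qed.

Lemma dec_Fc d : dec d -> dec (Fc d).
Proof.
move=> hd e e0; have hm : 0 < Num.min e del by rewrite lt_min e0 del0.
have [M hM] := hd _ hm.
exists M => I hI; have := hM I hI; rewrite lt_min => /andP[h1 h2].
by have [h3 _] := Fa_small h2; apply: le_lt_trans h3 h1.
Qed.

Definition G (a : mindex n -> V) := Rc ks (Fc (Dl ks a)).

Lemma G_S0 k a : subst0 k (G a) = G (subst0 k a).
Proof. by rewrite /G -Rc_Sp // Fc_Sp Dl_S0. Qed.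

Lemma G_S1 k a : dec a -> subst1 nrm k (G a) = G (subst1 nrm k a).
Proof.
move=> ha; rewrite /G -Rc_Tp //; last exact/dec_Fc/dec_Dl.
by rewrite Fc_Tp Dl_S1.
Qed.

Lemma G_id a : dec a -> (forall J, a J \in Rsub h) -> G a = a.
Proof.
move=> ha hP; rewrite /G.
have -> : Fc (Dl ks a) = Dl ks a.
  by apply: funext => J; rewrite /Fc Fa_id //; apply: (Dl_in (@Rsum h)).
by rewrite Rc_Dl.
Qed.

Lemma G_dec a : dec a -> dec (G a).
Proof. by move=> ha; apply/dec_Rc/dec_Fc/dec_Dl. Qed.

Lemma G_in a I : G a I \in Rsub h.
Proof. by apply: (Rc_in (@RB h)) => J; apply: Fa_in. Qed.

End F.

Lemma main_gen eps : 0 < eps ->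
  exists (h : nat) (st : 'I_N -> mindex n -> V),
    [/\ forall alpha, in_tate nrm (Rsub h) (st alpha),
        forall alpha, gauss_norm nrm (fun I => s alpha I - st alpha I) < eps,
        forall alpha beta (k : 'I_n),
          subst0 k (s alpha) = subst0 k (s beta) ->
          subst0 k (st alpha) = subst0 k (st beta),
        forall alpha beta (k : 'I_n),
          subst1 nrm k (s alpha) = subst1 nrm k (s beta) ->
          subst1 nrm k (st alpha) = subst1 nrm k (st beta)
      & forall alpha (k : 'I_n), nat_of_ord k = 0%N ->
          (exists h' : nat, in_tate nrm (Rsub h') (subst1 nrm k (s alpha))) ->
          subst1 nrm k (st alpha) = subst1 nrm k (s alpha)].
Proof.
move=> eps0; set del := eps / 2.
have del0 : 0 < del by rewrite divr_gt0.
have deleps : del < eps by rewrite /del ltr_pdivrMr // ltr_pMr // ltr1n.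
have [M hM] : exists M, forall alpha J, (M <= mdeg J)%N -> nrm (Dl ks (s alpha) J) < del.
  apply: (fin_choice (Q := fun alpha M => forall J, (M <= mdeg J)%N ->
                            nrm (Dl ks (s alpha) J) < del)).
    by move=> t m m' hmm' hQ J hJ; apply: hQ; apply: leq_trans hJ.
  by move=> alpha; apply: (dec_Dl ks (hs alpha)).
pose Jf (f : {ffun 'I_n -> 'I_M.+1}) : mindex n := [ffun k => nat_of_ord (f k)].
have [h1 hh1] : exists h, forall t : 'I_N * {ffun 'I_n -> 'I_M.+1},
    exists2 y, y \in Rsub h & nrm (Dl ks (s t.1) (Jf t.2) - y) < del.
  apply: fin_choice.
    by move=> t m m' hmm' [y hy hny]; exists y => //; apply: (nested_le Rnest) hy.
  move=> t; have [h [y hy hny]] := Rdense (Dl ks (s t.1) (Jf t.2)) del0.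
  by exists h, y.
have [h2 hh2] : exists h, forall t : 'I_N * 'I_n,
    (exists h', in_tate nrm (Rsub h') (subst1 nrm t.2 (s t.1))) ->
    in_tate nrm (Rsub h) (subst1 nrm t.2 (s t.1)).
  apply: fin_choice.
    move=> t m m' hmm' hQ hex; have [hc hin] := hQ hex; split => // I.
    exact: (nested_le Rnest) (hin I).
  move=> t; case: (classic (exists h', in_tate nrm (Rsub h') (subst1 nrm t.2 (s t.1)))).
    by case=> h' hh'; exists h'.
  by move=> hn; exists 0%N.
set h := maxn h1 h2.
exists h, (fun alpha => G h del (s alpha)); split.
- move=> alpha; split; first exact: (G_dec h del0).
  by move=> I; apply: G_in.
- move=> alpha.
  have close : forall I, nrm (s alpha I - G h del (s alpha) I) < del.
    move=> I; rewrite -{1}(Rc_Dl ks (hs alpha)); apply: Rc_close => J.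
    case: (ltP (nrm (Dl ks (s alpha) J)) del) => hJ.
      by have [_ ->] := Fa_small h del0 hJ.
    apply: (Fa_approx del0).
    have hJM : (mdeg J < M)%N.
      by rewrite ltnNge; apply/negP => /(hM alpha) /(lt_le_trans) /(_ hJ); rewrite ltxx.
    pose f : {ffun 'I_n -> 'I_M.+1} := [ffun k => inord (J k)].
    have -> : J = Jf f.
      apply/ffunP => k; rewrite /Jf !ffunE inordK //.
      by apply: leq_trans (mdeg_ge J k) _; apply: ltnW.
    have [y hy hny] := hh1 (alpha, f); exists y => //.
    by apply: (nested_le Rnest) hy; apply: leq_maxl.
  apply: le_lt_trans deleps; apply: ge_sup.
    by exists (nrm (s alpha 0 - G h del (s alpha) 0)), 0.
  by move=> r [I _ <-]; apply: ltW.
- by move=> alpha beta k he; rewrite !G_S0 he.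
- by move=> alpha beta k he; rewrite !(G_S1 h del0) // he.
- move=> alpha k _ hex; rewrite (G_S1 h del0) // G_id //.
  + by apply: dec_S1.
  + have [_ hin] := hh2 (alpha, k) hex.
    by move=> J; apply: (nested_le Rnest) (hin J); apply: leq_maxr.
Qed.

End Main.

End Ultra.


Unset Implicit Arguments.

Theorem propositionA6 (Rr : realType) (K : fieldType) (absK : K -> Rr)
    (R : algType K) (normR : R -> Rr) (Rsub : nat -> {pred R})
    (n N : nat) (s : 'I_N -> mindex n -> R) :
  nonarch_complete_field absK ->
  banach_algebra absK normR ->
  (forall h, complete_subring normR (Rsub h)) ->
  nested Rsub ->
  dense_union normR Rsub ->
  (forall alpha, strictly_convergent normR (s alpha)) ->
  forall eps : Rr, 0 < eps ->
  exists (h : nat) (st : 'I_N -> mindex n -> R),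
    [/\ forall alpha, in_tate normR (Rsub h) (st alpha),
        forall alpha, gauss_norm normR (fun I => s alpha I - st alpha I) < eps,
        forall alpha beta (k : 'I_n),
          subst0 k (s alpha) = subst0 k (s beta) ->
          subst0 k (st alpha) = subst0 k (st beta),
        forall alpha beta (k : 'I_n),
          subst1 normR k (s alpha) = subst1 normR k (s beta) ->
          subst1 normR k (st alpha) = subst1 normR k (st beta)
      & forall alpha (k : 'I_n), nat_of_ord k = 0%N ->
          (exists h' : nat, in_tate normR (Rsub h') (subst1 normR k (s alpha))) ->
          subst1 normR k (st alpha) = subst1 normR k (s alpha)].
Proof.
move=> hK hB hsub hnest hdense hs eps eps0.
case: hB => nge0 [neq0 nD nM nZ ncompl].
case: hK => aK0 aKeq0 aKM aKD aKc.
have a1 : absK 1 = 1.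
  have h1 : absK 1 != 0 by apply/eqP => /aKeq0 /eqP; rewrite oner_eq0.
  have := aKM 1 1; rewrite mulr1 => /eqP; rewrite -subr_eq0 -{1}(mulr1 (absK 1)) -mulrBr.
  by rewrite mulf_eq0 (negbTE h1) /= subr_eq0 => /eqP <-.
have am1 : absK (-1) = 1.
  apply/eqP; rewrite -sqrp_eq1 ?aK0 // expr2 -aKM mulrNN mulr1 a1 //.
have nN x : normR (- x) = normR x by rewrite -scaleN1r nZ am1 mul1r.
have RB h x y : x \in Rsub h -> y \in Rsub h -> x - y \in Rsub h.
  by have [_ hb _ _] := hsub h; apply: hb.
have R0 h : 0 \in Rsub h.
  by have [h1 hb _ _] := hsub h; rewrite -(subrr 1); apply: hb.
have Rsum h u : null normR u -> (forall j, u j \in Rsub h) -> series_sum normR u \in Rsub h.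
  apply: (Psum_of nge0 neq0 nN nD ncompl) => //; first exact: RB.
  by have [_ _ _ hc] := hsub h.
exact: (main_gen nge0 neq0 nN nD ncompl RB R0 Rsum hnest hdense hs eps0).
Qed.
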